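(* Let $n\ge 1$, let $B_1,\dots,B_n$ be independent real-valued service times with finite means $\mu_i$ and variances $\sigma_i^2$, and let $\omega\in(0,1)$. Assume (dilation ordering) $B_1\le_{\mathrm{dil}}B_2\le_{\mathrm{dil}}\cdots\le_{\mathrm{dil}}B_n$, and (symmetry) each $B_i$ has a distribution symmetric around its mean $\mu_i$. Then $$\varrho_\omega=\frac{C(\mathrm{Id},\boldsymbol\mu,\omega)}{\min_{\tau\in\mathsf S_n}C(\tau,\boldsymbol\mu,\omega)}\le 2.$$
   Context: Appointment model: a sequence is a permutation $\tau\in\mathsf S_n$ of $\{1,\dots,n\}$, $\tau(i)$ being the patient in appointment slot $i$. A schedule is a vector $\boldsymbol x=(x_1,\dots,x_n)$, where $x_j$ is the interarrival time between patient $j$ and the next patient. Waiting times $W_i$ and idle times $I_i$ of slot $i$ are given by $W_1=I_1=0$ and $W_{i+1}=(W_i+B_{\tau(i)}-x_{\tau(i)})^+$, $I_{i+1}=(W_i+B_{\tau(i)}-x_{\tau(i)})^-$, where $a^+=\max\{0,a\}$, $a^-=\max\{0,-a\}$. The cost is $C(\tau,\boldsymbol x,\omega)=\omega\sum_{i=1}^n\mathbb E I_i+(1-\omega)\sum_{i=1}^n\mathbb E W_i$. The mean-based schedule is $\boldsymbol\mu=(\mu_1,\dots,\mu_n)$, and $\mathrm{Id}$ is the identity permutation (the smallest-variance-first sequence). For random variables $A,B$, $A\le_{\mathrm{cx}}B$ means $\mathbb E\phi(A)\le\mathbb E\phi(B)$ for all convex $\phi:\mathbb R\to\mathbb R$ for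 which the expectations exist, and $A\le_{\mathrm{dil}}B$ means $A-\mathbb EA\le_{\mathrm{cx}}B-\mathbb EB$. *)

(* Defs.v *)
From HB Require Import structures.
From mathcomp Require Import all_boot all_order all_algebra all_fingroup.
From mathcomp Require Import all_classical all_reals all_analysis.
Set Implicit Arguments. Unset Strict Implicit. Unset Printing Implicit Defensive.
Import Order.TTheory GRing.Theory Num.Theory.
Local Open Scope classical_set_scope.
Local Open Scope ring_scope.

Section defs.
Context {d : measure_display} {T : measurableType d} {R : realType}.

Definition convex_fun (phi : R -> R) : Prop :=
  forall (x y t : R), 0 <= t -> t <= 1 ->
    phi (t * x + (1 - t) * y) <= t * phi x + (1 - t) * phi y.

Definition cx_le (P : probability T R) (X Y : T -> R) : Prop :=
  forall phi : R -> R, convex_fun phi ->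
    P.-integrable setT (fun t => (phi (X t))%:E) ->
    P.-integrable setT (fun t => (phi (Y t))%:E) ->
    ('E_P[phi \o X] <= 'E_P[phi \o Y])%E.

Definition mean (P : probability T R) (X : T -> R) : R := fine 'E_P[X].

Definition dil_le (P : probability T R) (X Y : T -> R) : Prop :=
  cx_le P (fun t => X t - mean P X) (fun t => Y t - mean P Y).

Definition mutually_independent (P : probability T R) (n : nat)
  (X : 'I_n -> T -> R) : Prop :=
  forall A : 'I_n -> set R, (forall i, measurable (A i)) ->
    fine (P (\bigcap_i (X i @^-1` A i))) =
    \prod_(i < n) fine (P (X i @^-1` A i)).

Definition symmetric_around_mean (P : probability T R) (X : T -> R) : Prop :=
  forall A : set R, measurable A ->
    P ((fun t => X t - mean P X) @^-1` A) = P ((fun t => mean P X - X t) @^-1` A).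

(* increment of slot k (0-indexed): B_{tau(k)} - x_{tau(k)}; 0 beyond n *)
Definition slot_incr (n : nat) (tau : 'S_n) (B : 'I_n -> T -> R)
  (x : 'I_n -> R) (k : nat) (t : T) : R :=
  match (insub k : option 'I_n) with
  | Some i => B (tau i) t - x (tau i)
  | None => 0
  end.

(* waiting time of slot k+1 (0-indexed slot k): W_1 = 0,
   W_{i+1} = (W_i + B_{tau(i)} - x_{tau(i)})^+ *)
Fixpoint waitW (n : nat) (tau : 'S_n) (B : 'I_n -> T -> R)
  (x : 'I_n -> R) (k : nat) (t : T) : R :=
  match k with
  | 0 => 0
  | k'.+1 => Num.max 0 (waitW tau B x k' t + slot_incr tau B x k' t)
  end.

Definition idleI (n : nat) (tau : 'S_n) (B : 'I_n -> T -> R)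
  (x : 'I_n -> R) (k : nat) (t : T) : R :=
  match k with
  | 0 => 0
  | k'.+1 => Num.max 0 (- (waitW tau B x k' t + slot_incr tau B x k' t))
  end.

Definition cost (P : probability T R) (n : nat) (B : 'I_n -> T -> R)
  (tau : 'S_n) (x : 'I_n -> R) (omega : R) : \bar R :=
  ((omega%:E * \sum_(k < n) 'E_P[idleI tau B x k]) +
   ((1 - omega)%:E * \sum_(k < n) 'E_P[waitW tau B x k]))%E.

End defs.

(* Main.v *)
Require Import Defs.
From HB Require Import structures.
From mathcomp Require Import all_boot all_order all_algebra all_fingroup.
From mathcomp Require Import all_classical all_reals all_analysis.
From mathcomp Require Import ring lra measurable_realfun.
Import Order.TTheory GRing.Theory Num.Theory.
Local Open Scope classical_set_scope.
Local Open Scope ring_scope.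

Section indep.
Context (d : measure_display) (T : measurableType d) (R : realType).
Variables (P : probability T R) (n : nat) (B : 'I_n -> T -> R).
Hypothesis mB : forall i, measurable_fun setT (B i).
Hypothesis indB : mutually_independent P B.

Definition PiJ (J : {set 'I_n}) : set (set T) :=
  [set E | exists A : 'I_n -> set R, (forall j, measurable (A j)) /\
     (forall j, j \notin J -> A j = setT) /\ E = \bigcap_j (B j @^-1` A j)].

Lemma PE (X : set T) : measurable X -> P X = (fine (P X))%:E.
Proof. by move=> mX; rewrite fineK // fin_num_measure. Qed.

Lemma mpre j (A : set R) : measurable A -> measurable (B j @^-1` A).
Proof. by move=> mA; rewrite -[X in measurable X]setTI; exact: mB. Qed.

Lemma PiJ_setI J : setI_closed (PiJ J).
Proof.
move=> _ _ [A [mA [JA ->]]] [A' [mA' [JA' ->]]].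
exists (fun j => A j `&` A' j); split; first by move=> j; exact: measurableI.
split; first by move=> j jJ; rewrite JA // JA' // setTI.
apply/seteqP; split => x /=.
  by move=> [H1 H2] j _; split; [exact: H1|exact: H2].
by move=> H; split => j _; have [] := H j I.
Qed.

Lemma PiJ_meas J E : PiJ J E -> measurable E.
Proof.
move=> [A [mA [_ ->]]]; apply: fin_bigcap_measurable.
  exact: finite_finset.
by move=> j _; exact: mpre.
Qed.


Lemma indep_PiJ (J : {set 'I_n}) (i : 'I_n) (E : set T) (C : set R) : i \notin J -> PiJ J E -> measurable C ->
  P (E `&` B i @^-1` C) = (P E * P (B i @^-1` C))%E.
Proof.
move=> iJ [A [mA [JA ->]]] mC.
pose A' := fun j => if j == i then C else A j.
have mA' : forall j, measurable (A' j) by move=> j; rewrite /A'; case: ifP.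
have -> : \bigcap_j (B j @^-1` A j) `&` B i @^-1` C = \bigcap_j (B j @^-1` A' j).
  apply/seteqP; split => x /=.
    move=> [H1 H2] j _; rewrite /A'; case: eqP => [->//|_]; exact: H1.
  move=> H; split; last by have := H i I; rewrite /A' eqxx.
  move=> j _; have := H j I; rewrite /A'; case: eqP => [->|//].
  by rewrite JA.
have h1 := @indB A' mA'; have h2 := @indB A mA.
rewrite (bigD1 i) // in h1; rewrite [in X in _ = X * _]/A' eqxx in h1.
rewrite (bigD1 i) //= JA // preimage_setT probability_setT /= mul1r in h2.
have e : \prod_(j < n | j != i) fine (P (B j @^-1` A' j)) =
         \prod_(j < n | j != i) fine (P (B j @^-1` A j)).
  by apply: eq_bigr => j /negbTE ji; rewrite /A' ji.
rewrite e -h2 in h1.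
have mI : measurable (\bigcap_j (B j @^-1` A j)).
  by apply: fin_bigcap_measurable => // j _; exact: mpre.
have mI' : measurable (\bigcap_j (B j @^-1` A' j)).
  by apply: fin_bigcap_measurable => // j _; exact: mpre.
by rewrite (PE _ mI') h1 (PE _ mI) (PE _ (mpre i _ mC)) -EFinM mulrC.
Qed.


Lemma indep_sigJ (J : {set 'I_n}) (i : 'I_n) (C : set R) :
  i \notin J -> measurable C -> forall E, <<s PiJ J >> E ->
  measurable E /\ P (E `&` B i @^-1` C) = (P E * P (B i @^-1` C))%E.
Proof.
move=> iJ mC.
set F := B i @^-1` C; have mF : measurable F by exact: mpre.
pose H := [set E | measurable E /\ P (E `&` F) = (P E * P F)%E].
suff: <<s PiJ J >> `<=` H by move=> sub E /sub.
apply: (lambda_system_subset (PiJ_setI J)) => //; last first.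
  move=> E PE0; split; first exact: PiJ_meas PE0.
  exact: (indep_PiJ _ _ _ _ iJ PE0 mC).
split.
- by [].
- by split; [exact: measurableT|rewrite setTI probability_setT mul1e].
- move=> X Y YX [mX hX] [mY hY]; split; first exact: measurableD.
  have mXY : measurable (X `\` Y) by exact: measurableD.
  have e1 : P (X `&` F) = (P ((X `\` Y) `&` F) + P (Y `&` F))%E.
    rewrite -measureU //; [|exact: measurableI|exact: measurableI|].
      congr (P _); apply/seteqP; split => x /=.
        by move=> [Xx Fx]; have [Yx|nYx] := pselect (Y x); [right|left].
      by move=> [[[Xx _] Fx]|[Yx Fx]]; split => //; exact: YX.
    by apply/seteqP; split => x //= [[[_ nYx] _] [Yx _]].
  have e2 : P X = (P (X `\` Y) + P Y)%E.
    rewrite -measureU //.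
      congr (P _); apply/seteqP; split => x /=.
        by move=> Xx; have [Yx|nYx] := pselect (Y x); [right|left].
      by move=> [[Xx _]|Yx] //; exact: YX.
    by apply/seteqP; split => x //= [[_ nYx] Yx].
  have mXF : measurable (X `&` F) by exact: measurableI.
  have mYF : measurable (Y `&` F) by exact: measurableI.
  have mXYF : measurable ((X `\` Y) `&` F) by exact: measurableI.
  move: e1 e2 hX hY.
  rewrite (PE _ mXF) (PE _ mYF) (PE _ mXYF) (PE _ mX) (PE _ mY) (PE _ mXY) (PE _ mF).
  rewrite -!EFinD -!EFinM => -[e1] [e2] [hX] [hY].
  congr EFin.
  have -> : fine (P ((X `\` Y) `&` F)) = fine (P (X `&` F)) - fine (P (Y `&` F)).
    by rewrite e1; ring.
  by rewrite hX hY e2; ring.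
- move=> G ndG HG; split.
    by apply: bigcup_measurable => k _; have [] := HG k.
  rewrite setI_bigcupl.
  have mG k : measurable (G k) by have [] := HG k.
  have c1 : (fun k => P (G k `&` F)) @ \oo --> P (\bigcup_k (G k `&` F)).
    apply: nondecreasing_cvg_mu.
    - by move=> k; exact: measurableI.
    - by apply: bigcup_measurable => k _; exact: measurableI.
    - move=> a b ab; apply/subsetPset; apply: setSI; exact/subsetPset/ndG.
  have c2 : (fun k => P (G k) * P F)%E @ \oo --> (P (\bigcup_k G k) * P F)%E.
    apply: cvgeZr; first exact: fin_num_measure.
    apply: nondecreasing_cvg_mu => //.
    by apply: bigcup_measurable => k _.
  have e : (fun k => P (G k `&` F)) = (fun k => P (G k) * P F)%E.
    by apply/funext => k; have [] := HG k.
  rewrite e in c1; exact: (cvg_unique _ c1 c2).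
Qed.


Definition TJ (J : {set 'I_n}) := g_sigma_algebraType (PiJ J).

Lemma sigJ_meas (J : {set 'I_n}) E : <<s PiJ J >> E -> measurable E.
Proof.
move: E; apply: smallest_sub; first exact: sigma_algebra_measurable.
by move=> E; exact: PiJ_meas.
Qed.

Lemma mBJ (J : {set 'I_n}) j : j \in J -> measurable_fun (setT : set (TJ J)) (B j).
Proof.
move=> jJ _ A mA; rewrite setTI; apply: sub_gen_smallest.
exists (fun k => if k == j then A else setT); split.
  by move=> k; case: ifP.
split.
  by move=> k kJ; case: eqP => [kj|//]; rewrite kj jJ in kJ.
apply/seteqP; split => x /=.
  by move=> Ax k _; case: eqP => [->|].
by move=> H; have := H j I; rewrite eqxx.
Qed.

Lemma mJ_meas (J : {set 'I_n}) (f : T -> R) :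
  measurable_fun (setT : set (TJ J)) f -> measurable_fun setT f.
Proof. by move=> mf _ A mA; exact: sigJ_meas (mf measurableT A mA). Qed.

Lemma indep_fun (J : {set 'I_n}) (i : 'I_n) (X : T -> R) : i \notin J ->
  measurable_fun (setT : set (TJ J)) X -> forall A C, measurable A -> measurable C ->
  P (X @^-1` A `&` B i @^-1` C) = (P (X @^-1` A) * P (B i @^-1` C))%E.
Proof.
move=> iJ mX A C mA mC.
have := mX measurableT A mA; rewrite setTI => sA.
exact: (indep_sigJ _ _ _ iJ mC _ sA).2.
Qed.

Lemma indep_fubini (J : {set 'I_n}) (i : 'I_n) (X : T -> R) (h : R * R -> \bar R) : i \notin J ->
  measurable_fun (setT : set (TJ J)) X -> measurable_fun setT h ->
  (forall z, 0 <= h z)%E ->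
  (\int[P]_t h (X t, B i t) = \int[P]_t \int[P]_s h (X t, B i s))%E.
Proof.
move=> iJ mXJ mh h0.
have mX := mJ_meas _ _ mXJ.
pose XR : {RV P >-> R} := HB.pack X (isMeasurableFun.Build _ _ _ _ X mX).
pose YR : {RV P >-> R} := HB.pack (B i) (isMeasurableFun.Build _ _ _ _ (B i) (mB i)).
have mphi : measurable_fun setT (fun t => (X t, B i t)).
  exact: measurable_fun_pair.
pose PR : {RV P >-> (R * R)%type} :=
  HB.pack (fun t => (X t, B i t)) (isMeasurableFun.Build _ _ _ _ _ mphi).
transitivity (\int[distribution P PR]_z h z)%E.
  by rewrite ge0_integral_distribution.
transitivity (\int[distribution P XR \x distribution P YR]_z h z)%E.
  apply: eq_measure_integral => A mA _.
  apply/esym; apply: product_measure_unique => // A1 A2 mA1 mA2.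
  rewrite /distribution /pushforward /=.
  by rewrite -(indep_fun _ _ _ iJ mXJ _ _ mA1 mA2).
rewrite (fubini_tonelli1 h) //.
rewrite /fubini_F.
rewrite ge0_integral_distribution //; last first.
  - by move=> x; apply: integral_ge0 => y _; exact: h0.
  - exact: (measurable_fun_fubini_tonelli_F h).
apply: eq_integral => t _ /=.
rewrite ge0_integral_distribution //.
exact: measurable_fun_pair2.
Qed.

End indep.

Section main.
Context (d : measure_display) (T : measurableType d) (R : realType).
Variables (P : probability T R) (n : nat) (B : 'I_n -> T -> R).
Hypothesis mB : forall i, measurable_fun setT (B i).
Hypothesis indB : mutually_independent P B.
Hypothesis iB : forall i, P.-integrable setT (EFin \o B i).

Definition muB i := mean P (B i).
Definition Z i t := B i t - muB i.

Lemma mZ i : measurable_fun setT (Z i).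
Proof. exact: measurable_funB. Qed.

Lemma iZ i : P.-integrable setT (EFin \o Z i).
Proof.
have -> : EFin \o Z i = ((EFin \o B i) \- (EFin \o cst (muB i)))%E.
  by apply/funext => t.
apply: integrableB => //; exact: finite_measure_integrable_cst.
Qed.

Lemma intZ i : (\int[P]_t (Z i t)%:E = 0)%E.
Proof.
rewrite /Z (_ : (fun t => _) = (fun t => (B i t)%:E - (cst (muB i) t)%:E)%E); last first.
  by apply/funext => t.
rewrite integralB_EFin //; last exact: finite_measure_integrable_cst.
rewrite [X in (_ - X)%E](_ : _ = (muB i)%:E); last first.
  rewrite (integral_cst P measurableT (muB i)%:E) -[RHS]mule1; congr (_ * _)%E.
  exact: probability_setT.
rewrite /muB /mean.
have fE := @integrable_fin_num _ _ _ P setT measurableT _ (iB i).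
by rewrite unlock fineK ?subee.

Qed.


Hypothesis symB : forall i, symmetric_around_mean P (B i).

Lemma sym_int i (phi : R -> \bar R) : measurable_fun setT phi ->
  (forall x, 0 <= phi x)%E ->
  (\int[P]_t phi (Z i t) = \int[P]_t phi (- Z i t)%R)%E.
Proof.
move=> mphi phi0.
have mNZ : measurable_fun setT (fun t => - Z i t) by exact: measurableT_comp (mZ i).
pose ZR : {RV P >-> R} := HB.pack (Z i) (isMeasurableFun.Build _ _ _ _ _ (mZ i)).
pose NZR : {RV P >-> R} := HB.pack (fun t => - Z i t) (isMeasurableFun.Build _ _ _ _ _ mNZ).
transitivity (\int[distribution P ZR]_y phi y)%E.
  by rewrite ge0_integral_distribution.
transitivity (\int[distribution P NZR]_y phi y)%E; last first.
  by rewrite ge0_integral_distribution.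
apply: eq_measure_integral => A mA _.
rewrite /distribution /pushforward /=.
transitivity (P ((fun t => mean P (B i) - B i t) @^-1` A)).
  exact: symB.
congr (P _); apply/seteqP; split => t /=; by rewrite /Z /muB opprB.
Qed.

Hypothesis dilB : forall i j : 'I_n, nat_of_ord j = (nat_of_ord i).+1 -> dil_le P (B i) (B j).

Lemma iabs i x : P.-integrable setT (fun t => (`|x + Z i t|)%:E).
Proof.
have h : P.-integrable setT (EFin \o (fun t => x + Z i t)).
  have -> : EFin \o (fun t => x + Z i t) = ((EFin \o cst x) \+ (EFin \o Z i))%E.
    by apply/funext.
  apply: integrableD => //; [exact: finite_measure_integrable_cst|exact: iZ].
exact: (integrable_norm h).
Qed.

Lemma dil_abs1 (i j : 'I_n) x : nat_of_ord j = (nat_of_ord i).+1 ->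
  (\int[P]_t (`|x + Z i t|)%:E <= \int[P]_t (`|x + Z j t|)%:E)%E.
Proof.
move=> ji; have := @dilB i j ji (fun z => `|x + z|).
rewrite /= !unlock; apply.
- move=> a b t t0 t1.
  have -> : x + (t * a + (1 - t) * b) = t * (x + a) + (1 - t) * (x + b) by ring.
  apply: le_trans (ler_normD _ _) _.
  rewrite !normrM !(ger0_norm t0) (ger0_norm (_ : 0 <= 1 - t)) //.
  by rewrite subr_ge0.
- by move: (iabs i x); rewrite unlock.
- by move: (iabs j x); rewrite unlock.
Qed.

Lemma dil_abs x k : forall (i j : 'I_n), nat_of_ord j = (i + k)%N ->
  (\int[P]_t (`|x + Z i t|)%:E <= \int[P]_t (`|x + Z j t|)%:E)%E.
Proof.
elim: k => [|k IH] i j ji.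
  by rewrite addn0 in ji; rewrite (val_inj ji).
have hk : (i + k < n)%N by apply: leq_trans (ltn_ord j); rewrite ji addnS.
apply: le_trans (IH i (Ordinal hk) erefl) _.
apply: dil_abs1 => /=; by rewrite ji addnS.
Qed.


Let TJ' (J : {set 'I_n}) := TJ d T R n B J.

Lemma mfubF (f : R * T -> \bar R) : measurable_fun setT f -> (forall z, 0 <= f z)%E ->
  measurable_fun setT (fun x => \int[P]_s f (x, s))%E.
Proof. by move=> mf f0; exact: (@measurable_fun_fubini_tonelli_F _ _ _ _ _ P f mf f0). Qed.

Lemma mZJ (J : {set 'I_n}) j : j \in J -> measurable_fun (setT : set (TJ' J)) (Z j).
Proof. by move=> jJ; apply: measurable_funB => //; exact: mBJ. Qed.

Definition SA (A : {set 'I_n}) t := \sum_(j in A) Z j t.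

Lemma mSA (J A : {set 'I_n}) : A \subset J -> measurable_fun (setT : set (TJ' J)) (SA A).
Proof.
move=> AJ.
have -> : SA A = fun t => \sum_(j < n) (if j \in A then Z j t else 0).
  by apply/funext => t; rewrite /SA big_mkcond.
apply: (@measurable_sum _ (TJ' J) R setT _ _ (fun j t => if j \in A then Z j t else 0)) => j /=.
case: (boolP (j \in A)) => jA.
  by apply: mZJ; exact: (fintype.subsetP AJ j jA).
exact: measurable_cst.
Qed.

Lemma mSAT (A : {set 'I_n}) : measurable_fun setT (SA A).
Proof. exact: (@mJ_meas d T R n B mB A (SA A) (mSA A A (fintype.subxx A))). Qed.


Lemma mfubZ (c : 'I_n) : measurable_fun setT (fun x : R => \int[P]_s (`|x + Z c s|)%:E)%E.
Proof.
apply: (mfubF (fun z : R * T => (`|z.1 + Z c z.2|)%:E)) => //.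
apply/measurable_EFinP; apply: measurableT_comp => //.
apply: measurable_funD => //; exact: measurableT_comp (mZ c) _.
Qed.

Lemma exch (A : {set 'I_n}) (a b : 'I_n) : a \in A -> b \notin A -> (b <= a)%N ->
  (\int[P]_t (`|SA (b |: (A :\ a)) t|)%:E <= \int[P]_t (`|SA A t|)%:E)%E.
Proof.
move=> aA bA ba.
set J := A :\ a.
have aJ : a \notin J by rewrite !inE eqxx.
have bJ : b \notin J by rewrite !inE negb_and bA orbT.
have e1 t : SA A t = SA J t + Z a t by rewrite /SA (big_setD1 a aA) addrC.
have e2 t : SA (b |: J) t = SA J t + Z b t by rewrite /SA big_setU1 // addrC.
pose h (c : 'I_n) := fun z : R * R => (`|z.1 + (z.2 - muB c)|)%:E.
have mh c : measurable_fun setT (h c).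
  apply/measurable_EFinP; apply: measurableT_comp => //.
  apply: measurable_funD => //; exact: measurable_funB.
have key c : c \notin J -> (\int[P]_t (`|SA J t + Z c t|)%:E =
    \int[P]_t \int[P]_s (`|SA J t + Z c s|)%:E)%E.
  move=> cJ.
  have h0 : forall z, (0 <= h c z)%E by move=> z; rewrite /h lee_fin.
  have H := (indep_fubini d T R P n B mB indB J c (SA J) (h c) cJ
    (mSA J J (fintype.subxx J)) (mh c) h0).
  exact H.
rewrite (eq_integral (fun t => (`|SA J t + Z b t|)%:E)); last first.
  by move=> t _; rewrite e2.
rewrite [X in (_ <= X)%E](eq_integral (fun t => (`|SA J t + Z a t|)%:E)); last first.
  by move=> t _; rewrite e1.
rewrite key // key //.
apply: ge0_le_integral => //.
- by move=> t _; apply: integral_ge0.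
- exact: (measurableT_comp (mfubZ b) (mSAT J)).
- exact: (measurableT_comp (mfubZ a) (mSAT J)).
- move=> t _; apply: (dil_abs (SA J t) (a - b)).
  by rewrite subnKC.
Qed.


Definition Pk (k : nat) : {set 'I_n} := [set j : 'I_n | (j < k)%N].

Lemma SA_prefix k : forall A : {set 'I_n}, #|A| = #|Pk k| ->
  (\int[P]_t (`|SA (Pk k) t|)%:E <= \int[P]_t (`|SA A t|)%:E)%E.
Proof.
move=> A; have [m wm] := ubnP (\sum_(j in A) (j : nat))%N.
elim: m A wm => // m IH A wA cA.
have [->|neq] := eqVneq A (Pk k); first exact: le_refl.
have [a aA aP] : exists2 a, a \in A & a \notin Pk k.
  apply/subsetPn; apply: contra neq => sub.
  by rewrite eqEcard sub cA leqnn.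
have [b bP bA] : exists2 b, b \in Pk k & b \notin A.
  apply/subsetPn; apply: contra neq => sub.
  by rewrite eq_sym eqEcard sub cA leqnn.
have ba : (b < a)%N.
  rewrite !inE in aP bP; rewrite -leqNgt in aP; exact: (leq_trans bP aP).
apply: le_trans (exch A a b aA bA (ltnW ba)).
have bJ : b \notin A :\ a by rewrite !inE negb_and bA orbT.
apply: IH.
- rewrite big_setU1 //=; rewrite (big_setD1 a aA) /= in wA.
  by rewrite ltnS in wA; apply: (leq_trans _ wA); rewrite ltn_add2r.
- by rewrite cardsU1 bJ -cA (cardsD1 a A) aA.
Qed.


Lemma slot_lt (s : 'S_n) (k : 'I_n) t : slot_incr s B muB k t = Z (s k) t.
Proof.
rewrite /slot_incr; case: insubP => [k' _ /val_inj -> //|].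
by rewrite ltn_ord.
Qed.

Definition Sg (s : 'S_n) k t := \sum_(j < k) slot_incr s B muB j t.

Lemma W_ge (s : 'S_n) k t :
  0 <= waitW s B muB k t /\ Sg s k t <= waitW s B muB k t.
Proof.
elim: k => [|k [IH0 IH]] /=; first by rewrite /Sg big_ord0.
split; first by rewrite le_max lexx.
rewrite /Sg big_ord_recr /= -/(Sg s k t) le_max; apply/orP; right.
by rewrite lerD2r.
Qed.

Lemma Sg_SA (s : 'S_n) k t : (k <= n)%N -> Sg s k t = SA (s @: Pk k) t.
Proof.
move=> kn; rewrite /Sg (big_ord_widen n (fun j => slot_incr s B muB j t) kn).
rewrite /SA big_imset /=; last by move=> x y _ _; exact: perm_inj.
apply: eq_big => j; first by rewrite inE.
by move=> _; rewrite slot_lt.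
Qed.

Lemma m_incr_J (s : 'S_n) (J : {set 'I_n}) k :
  (forall j : 'I_n, nat_of_ord j = k -> s j \in J) ->
  measurable_fun (setT : set (TJ' J)) (slot_incr s B muB k).
Proof.
move=> hJ; rewrite /slot_incr; case: insubP => [k' _ kk|_].
  by apply: mZJ; exact: hJ.
exact: measurable_cst.
Qed.

Lemma mW_J (s : 'S_n) (J : {set 'I_n}) k :
  (forall j : 'I_n, (j < k)%N -> s j \in J) ->
  measurable_fun (setT : set (TJ' J)) (waitW s B muB k).
Proof.
elim: k => [|k IH] hJ.
  exact: measurable_cst.
have -> : waitW s B muB k.+1 =
   (fun t => Num.max 0 (waitW s B muB k t + slot_incr s B muB k t)) by [].
apply: measurable_maxr; first exact: measurable_cst.
apply: measurable_funD.
  by apply: IH => j jk; apply: hJ; exact: ltnW.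
by apply: m_incr_J => j jk; apply: hJ; rewrite jk.
Qed.

Lemma mSg_J (s : 'S_n) (J : {set 'I_n}) k :
  (forall j : 'I_n, (j < k)%N -> s j \in J) ->
  measurable_fun (setT : set (TJ' J)) (Sg s k).
Proof.
move=> hJ; rewrite /Sg.
apply: (@measurable_sum _ (TJ' J) R setT _ _ (fun j t => slot_incr s B muB (nat_of_ord j) t)) => j /=.
by apply: m_incr_J => j' jj; apply: hJ; rewrite jj.
Qed.

Definition J0 : {set 'I_n} := ~: finset.set0.

Lemma mW (s : 'S_n) k : measurable_fun setT (waitW s B muB k).
Proof.
apply: (@mJ_meas d T R n B mB J0).
by apply: mW_J => j _; rewrite !inE.
Qed.

Lemma mSg (s : 'S_n) k : measurable_fun setT (Sg s k).
Proof.
apply: (@mJ_meas d T R n B mB J0).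
by apply: mSg_J => j _; rewrite !inE.
Qed.


Lemma inc_int (s : 'S_n) k : P.-integrable setT (EFin \o slot_incr s B muB k) /\
  (\int[P]_t (slot_incr s B muB k t)%:E = 0)%E.
Proof.
rewrite /slot_incr; case: insubP => [k' _ _|_] /=.
  by split; [exact: iZ|exact: intZ].
split; first exact: integrable0.
by apply: integral0_eq.
Qed.

Lemma Sg_int (s : 'S_n) k : P.-integrable setT (EFin \o Sg s k) /\
  (\int[P]_t (Sg s k t)%:E = 0)%E.
Proof.
elim: k => [|k [IHi IHe]].
  have -> : Sg s 0 = fun _ => 0 by apply/funext => t; rewrite /Sg big_ord0.
  by split; [exact: integrable0|apply: integral0_eq].
have [i1 e1] := inc_int s k.
have -> : Sg s k.+1 = fun t => Sg s k t + slot_incr s B muB k t.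
  by apply/funext => t; rewrite /Sg big_ord_recr.
have -> : EFin \o (fun t => Sg s k t + slot_incr s B muB k t) =
    ((EFin \o Sg s k) \+ (EFin \o slot_incr s B muB k))%E by apply/funext.
split; first exact: integrableD.
rewrite (integralD_EFin measurableT IHi i1).
by rewrite IHe e1 adde0.
Qed.

Lemma L3 (s : 'S_n) k : (\int[P]_t (`|Sg s k t|)%:E <=
  \int[P]_t (waitW s B muB k t)%:E + \int[P]_t (waitW s B muB k t)%:E)%E.
Proof.
have [iS eS] := Sg_int s k.
pose f := EFin \o Sg s k.
have mf : measurable_fun setT f := measurable_int _ iS.
have -> : (fun t => (`|Sg s k t|)%:E) = (fun t => f^\+ t + f^\- t)%E.
  apply/funext => t; rewrite -abse_EFin.
  by have := congr1 (fun g => g t) (fune_abse f).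
rewrite ge0_integralD //; last 2 first.
- exact: measurable_funepos.
- exact: measurable_funeneg.
have pf := integrable_pos_fin_num measurableT iS.
have nf := integrable_neg_fin_num measurableT iS.
have epn : (\int[P]_t f^\+ t = \int[P]_t f^\- t)%E.
  move: eS; rewrite integralE -(fineK pf) -(fineK nf) -EFinB => -[] /eqP.
  by rewrite subr_eq0 => /eqP ->.
rewrite -epn; apply: leeD; apply: ge0_le_integral => //.
- exact: measurable_funepos.
- by apply/measurable_EFinP; exact: mW.
- move=> t _; rewrite funeposE ge_max /f /= !lee_fin.
  by have [h1 h2] := W_ge s k t; rewrite h1 h2.
- exact: measurable_funepos.
- by apply/measurable_EFinP; exact: mW.
- move=> t _; rewrite funeposE ge_max /f /= !lee_fin.
  by have [h1 h2] := W_ge s k t; rewrite h1 h2.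
Qed.


Lemma levy k : (k < n)%N -> forall phi : R -> \bar R, measurable_fun setT phi ->
  (forall x, 0 <= phi x)%E -> (forall x y, x <= y -> (phi x <= phi y)%E) ->
  (\int[P]_t phi (waitW 1 B muB k t) <= \int[P]_t phi (`|Sg 1 k t|)%R)%E.
Proof.
elim: k => [|k IH] kn phi mphi phi0 phimon.
  rewrite [X in (_ <= X)%E](eq_integral (fun t => phi 0)) //.
  by move=> t _; rewrite /Sg big_ord0 normr0.
have kn' : (k < n)%N := ltnW kn.
pose o : 'I_n := Ordinal kn'.
have eW t : waitW 1 B muB k.+1 t = Num.max 0 (waitW 1 B muB k t + Z o t).
  by rewrite /= (slot_lt 1 o) perm1.
have eS t : Sg 1 k.+1 t = Sg 1 k t + Z o t.
  by rewrite /Sg big_ord_recr /= (slot_lt 1 o) perm1.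
pose J := Pk k.
have oJ : o \notin J by rewrite inE ltnn.
have mWJ : measurable_fun (setT : set (TJ' J)) (waitW 1 B muB k).
  by apply: mW_J => j jk; rewrite perm1 inE.
have mSJ : measurable_fun (setT : set (TJ' J)) (Sg 1 k).
  by apply: mSg_J => j jk; rewrite perm1 inE.
pose g (x : R) := (\int[P]_s phi (Num.max 0 (x + Z o s))%R)%E.
pose g2 (x : R) := (\int[P]_s phi (`|x + Z o s|)%R)%E.
have mg : measurable_fun setT g.
  apply: (mfubF (fun z : R * T => phi (Num.max 0 (z.1 + Z o z.2)))).
    apply: measurableT_comp => //; apply: measurable_maxr => //.
    by apply: measurable_funD => //; exact: measurableT_comp (mZ o) _.
  by move=> z; exact: phi0.
have mg2 : measurable_fun setT g2.
  apply: (mfubF (fun z : R * T => phi `|z.1 + Z o z.2|)).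
    apply: measurableT_comp => //; apply: measurableT_comp => //.
    by apply: measurable_funD => //; exact: measurableT_comp (mZ o) _.
  by move=> z; exact: phi0.
have g0 x : (0 <= g x)%E by apply: integral_ge0 => s _; exact: phi0.
have mgs (x : R) : measurable_fun setT (fun s => phi (Num.max 0 (x + Z o s))).
  apply: measurableT_comp => //; apply: measurable_maxr => //.
  by apply: measurable_funD => //; exact: mZ.
have gmon x y : x <= y -> (g x <= g y)%E.
  move=> xy; apply: ge0_le_integral => //; try exact: mgs;
    try (by move=> s _; exact: phi0).
  move=> s _; apply: phimon.
    by rewrite ge_max !le_max lexx lerD2r xy !orbT.
pose h1 := fun z : R * R => phi (Num.max 0 (z.1 + (z.2 - muB o))).
have mh1 : measurable_fun setT h1.
  apply: measurableT_comp => //; apply: measurable_maxr => //.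
  by apply: measurable_funD => //; exact: measurable_funB.
pose h2 := fun z : R * R => phi `|z.1 + (z.2 - muB o)|.
have mh2 : measurable_fun setT h2.
  apply: measurableT_comp => //; apply: measurableT_comp => //.
  by apply: measurable_funD => //; exact: measurable_funB.
have F1 := indep_fubini d T R P n B mB indB J o (waitW 1 B muB k) h1 oJ mWJ mh1
  (fun z => phi0 _).
have F2 := indep_fubini d T R P n B mB indB J o (Sg 1 k) h2 oJ mSJ mh2
  (fun z => phi0 _).
rewrite (eq_integral (fun t => h1 (waitW 1 B muB k t, B o t))); last first.
  by move=> t _; rewrite eW.
rewrite F1.
rewrite [X in (_ <= X)%E](eq_integral (fun t => h2 (Sg 1 k t, B o t))); last first.
  by move=> t _; rewrite eS.
rewrite F2.
apply: le_trans (IH kn' g mg g0 gmon) _.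
have m1 : measurable_fun setT (fun t => g (`|Sg 1 k t|)%R).
  apply: measurableT_comp mg _; apply: measurableT_comp => //; exact: mSg.
have m2 : measurable_fun setT (fun t => g2 (Sg 1 k t)).
  apply: measurableT_comp mg2 _; exact: mSg.
apply: ge0_le_integral => //; try exact: m1; try exact: m2;
  try (by move=> t _; exact: g0).
move=> t _.
set x := Sg 1 k t.
have key : g2 x = (\int[P]_s phi (`| `|x| + Z o s|)%R)%E.
  have [x0|x0] := leP 0 x; first by rewrite ger0_norm.
  rewrite ltr0_norm // /g2.
  rewrite (sym_int o (fun z => phi `|x + z|)); last 2 first.
  - apply: measurableT_comp => //; apply: measurableT_comp => //.
    exact: measurable_funD.
  - by move=> z; exact: phi0.
  apply: eq_integral => s _.
  by rewrite -normrN opprD opprK.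
rewrite /= -/x [X in (_ <= X)%E]key.
have m3 : measurable_fun setT (fun s => phi (`| `|x| + Z o s|)%R).
  apply: measurableT_comp => //; apply: measurableT_comp => //.
  by apply: measurable_funD => //; exact: mZ.
apply: ge0_le_integral => //; try exact: m3; try exact: mgs;
  try (by move=> s _; exact: phi0).
move=> s _; apply: phimon.
by rewrite ge_max normr_ge0 ler_norm.
Qed.


Lemma chainW (tau : 'S_n) k : (k < n)%N ->
  (\int[P]_t (waitW 1 B muB k t)%:E <=
   \int[P]_t (waitW tau B muB k t)%:E + \int[P]_t (waitW tau B muB k t)%:E)%E.
Proof.
move=> kn.
apply: le_trans (L3 tau k).
have L1 : (\int[P]_t (waitW 1 B muB k t)%:E <= \int[P]_t (`|Sg 1 k t|)%:E)%E.
  have := @levy k kn (fun x => (Num.max x 0)%:E).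
  have -> : (\int[P]_t (Num.max (waitW 1 B muB k t) 0)%:E =
             \int[P]_t (waitW 1 B muB k t)%:E)%E.
    apply: eq_integral => t _; congr EFin.
    by have [h _] := W_ge 1 k t; rewrite max_l.
  have -> : (\int[P]_t (Num.max (`|Sg 1 k t|) 0)%:E =
             \int[P]_t (`|Sg 1 k t|)%:E)%E.
    by apply: eq_integral => t _; rewrite max_l.
  apply.
  - by apply/measurable_EFinP; exact: measurable_maxr.
  - by move=> x; rewrite lee_fin le_max lexx orbT.
  - by move=> x y xy; rewrite lee_fin ge_max !le_max lexx xy /= ?orbT.
apply: le_trans L1 _.
have e1 : (1%g : 'S_n) @: Pk k = Pk k.
  apply/setP => j; apply/imsetP/idP => [[j' jP ->]|jP].
    by rewrite perm1.
  by exists j; rewrite ?perm1.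
have kn' : (k <= n)%N := ltnW kn.
rewrite (eq_integral (fun t => (`|SA (Pk k) t|)%:E)); last first.
  by move=> t _; rewrite (Sg_SA 1 k t kn') e1.
rewrite [X in (_ <= X)%E](eq_integral (fun t => (`|SA (tau @: Pk k) t|)%:E)); last first.
  by move=> t _; rewrite (Sg_SA tau k t kn').
apply: SA_prefix.
by rewrite card_imset //; exact: perm_inj.
Qed.


Lemma W_int (s : 'S_n) k : P.-integrable setT (EFin \o waitW s B muB k).
Proof.
elim: k => [|k IH].
  by apply: (eq_integrable _ (cst 0%E)) => //; exact: integrable0.
have [i1 _] := inc_int s k.
have ig : P.-integrable setT (EFin \o (fun t => waitW s B muB k t +
    `|slot_incr s B muB k t|)).
  have -> : EFin \o (fun t => waitW s B muB k t + `|slot_incr s B muB k t|) =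
    ((EFin \o waitW s B muB k) \+ (EFin \o (Num.norm \o slot_incr s B muB k)))%E.
    by apply/funext.
  apply: integrableD => //; exact: integrable_norm.
apply: le_integrable ig.
  by [].
  by apply/measurable_EFinP; exact: mW.
move=> t _ /=; rewrite lee_fin.
have [h0 _] := W_ge s k t.
rewrite ger0_norm; last by rewrite le_max lexx.
rewrite ger0_norm ?addr_ge0 //.
rewrite ge_max addr_ge0 //= lerD2l; exact: ler_norm.
Qed.

Lemma I_step (s : 'S_n) k :
  (\int[P]_t (waitW s B muB k.+1 t)%:E =
   \int[P]_t (idleI s B muB k.+1 t)%:E + \int[P]_t (waitW s B muB k t)%:E)%E.
Proof.
have [i1 e1] := inc_int s k.
have iWk := W_int s k.
have iy : P.-integrable setT (EFin \o (fun t => waitW s B muB k t + slot_incr s B muB k t)).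
  have -> : EFin \o (fun t => waitW s B muB k t + slot_incr s B muB k t) =
    ((EFin \o waitW s B muB k) \+ (EFin \o slot_incr s B muB k))%E by apply/funext.
  exact: integrableD.
have iI : P.-integrable setT (EFin \o idleI s B muB k.+1).
  have mi : measurable_fun setT (slot_incr s B muB k).
    by apply/measurable_EFinP; exact: (measurable_int _ i1).
  apply: le_integrable iy; first by [].
    have -> : idleI s B muB k.+1 =
      fun t => Num.max 0 (- (waitW s B muB k t + slot_incr s B muB k t)) by [].
    apply/measurable_EFinP; apply: measurable_maxr => //.
    apply: measurableT_comp => //; apply: measurable_funD => //; exact: mW.
  move=> t _ /=; rewrite lee_fin.
  rewrite ger0_norm; last by rewrite le_max lexx.
  by rewrite ge_max normr_ge0 /= -normrN ler_norm.
rewrite (eq_integral (fun t => ((EFin \o idleI s B muB k.+1) \+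
    (EFin \o (fun t => (waitW s B muB k t + slot_incr s B muB k t)%R))) t)%E); last first.
  move=> t _ /=; congr EFin.
  set y := waitW s B muB k t + slot_incr s B muB k t.
  have [y0|y0] := leP 0 y.
    have : - y <= 0 by rewrite oppr_le0.
    by move/max_idPl => ->; rewrite add0r.
  have : 0 <= - y by rewrite oppr_ge0 ltW.
  by move/max_idPr => ->; rewrite addNr.
rewrite (integralD_EFin measurableT iI iy).
congr (_ + _)%E.
rewrite (eq_integral (fun t => ((EFin \o waitW s B muB k) \+
   (EFin \o slot_incr s B muB k)) t)%E) //.
by rewrite (integralD_EFin measurableT iWk i1) e1 adde0.
Qed.


Lemma idle_sum (s : 'S_n) m :
  (\sum_(k < m) \int[P]_t (idleI s B muB k t)%:E = \int[P]_t (waitW s B muB m.-1 t)%:E)%E.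
Proof.
elim: m => [|m IH].
  by rewrite big_ord0 /=; apply/esym/integral0_eq.
rewrite big_ord_recr /= IH.
case: m {IH} => [|m] /=.
  have -> : (\int[P]_t (idleI s B muB 0 t)%:E = 0)%E by apply: integral0_eq.
  by rewrite adde0.
by rewrite (I_step s m) addeC.
Qed.

Lemma fE (s : 'S_n) k : (\int[P]_t (waitW s B muB k t)%:E =
  (fine (\int[P]_t (waitW s B muB k t)%:E))%:E)%E.
Proof. by rewrite fineK //; apply: integrable_fin_num => //; exact: W_int. Qed.

Lemma Eu (X : T -> R) : ('E_P[X] = \int[P]_w (X w)%:E)%E.
Proof. by rewrite unlock. Qed.

Lemma idle_sumE (s : 'S_n) m :
  (\sum_(k < m) 'E_P[idleI s B muB k] = 'E_P[waitW s B muB m.-1])%E.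
Proof. under eq_bigr do rewrite Eu. by rewrite Eu idle_sum. Qed.

Lemma fE' (s : 'S_n) k : ('E_P[waitW s B muB k] =
  (fine (\int[P]_t (waitW s B muB k t)%:E))%:E)%E.
Proof. by rewrite Eu fE. Qed.

Lemma main_ineq (tau : 'S_n) (omega : R) : (1 <= n)%N -> 0 <= omega -> omega <= 1 ->
  (cost P B 1 muB omega <= 2%:E * cost P B tau muB omega)%E.
Proof.
move=> n1 o0 o1.
rewrite /cost !idle_sumE.
pose a k := fine (\int[P]_t (waitW 1 B muB k t)%:E).
pose b k := fine (\int[P]_t (waitW tau B muB k t)%:E).
have hab k : (k < n)%N -> a k <= 2 * b k.
  move=> kn; have := chainW tau k kn.
  rewrite (fE 1 k) (fE tau k) -EFinD lee_fin -/(a k) -/(b k).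
  by move=> h; apply: le_trans h _; rewrite mulr2n mulrDl mul1r.
rewrite (fE' 1) (fE' tau) -/(a _) -/(b _).
under eq_bigr do rewrite (fE' 1) -/(a _).
under [X in (_ <= _ * (_ + _ * X))%E]eq_bigr do rewrite (fE' tau) -/(b _).
rewrite !sumEFin -!EFinM -EFinD lee_fin.
have h1 : a n.-1 <= 2 * b n.-1 by apply: hab; rewrite prednK.
have h2 : \sum_(i < n) a i <= 2 * \sum_(i < n) b i.
  rewrite mulr_sumr; apply: ler_sum => i _; exact: hab.
nra.
Qed.

End main.

Theorem theorem3p1 (d : measure_display) (T : measurableType d) (R : realType)
  (P : probability T R) (n : nat) (B : 'I_n -> T -> R) (omega : R) :
  (1 <= n)%N ->
  (forall i, measurable_fun setT (B i)) ->
  (forall i, B i \in Lfun P 1) ->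
  (forall i, B i \in Lfun P 2) ->
  mutually_independent P B ->
  0 < omega < 1 ->
  (forall i j : 'I_n, nat_of_ord j = (nat_of_ord i).+1 -> dil_le P (B i) (B j)) ->
  (forall i, symmetric_around_mean P (B i)) ->
  let mu := fun i => mean P (B i) in
  forall tau : 'S_n,
    (cost P B 1%g mu omega <= 2%:E * cost P B tau mu omega)%E.
Proof.
move=> n1 mB iB1 iB2 indB om dilB symB mu tau.
have iB i : P.-integrable setT (EFin \o B i) by apply/Lfun1_integrable.
case/andP: om => o0 o1.
exact: (@main_ineq d T R P n B mB indB iB symB dilB tau omega n1 (ltW o0) (ltW o1)).
Qed.
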